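(* In the Byblos protocol described in the context, if a transaction is assigned timestamp $t$, then for every integer $t'$ with $0<t'<t$, some transaction is assigned timestamp $t'$.
   Context: Byblos timestamping. There are $n=4f+1$ servers, at most $f$ of which are Byzantine; the rest are correct. Clients are not Byzantine (they may crash). Messages between correct parties are eventually delivered, channels are FIFO, senders are authenticated, and client messages are signed and unforgeable. Each correct server keeps an integer $\mathit{clock}$, initially $0$. Client with transaction $T$: broadcasts $\mathrm{Propose}(T)$ to all servers; waits for $\mathrm{ProposeAck}(T,\cdot)$ responses from at least $n-f$ servers; letting $\mathit{timestamp}[s]$ be the value received from server $s$ ($0$ if none), sets $\hat t$ to $1$ plus the $(f+1)$-st largest value of $\mathit{timestamp}[\cdot]$; then broadcasts $\mathrm{Confirm}(T,\hat t)$. Correct server: on $\mathrm{Propose}(T)$ from a client, replies $\mathrm{ProposeAck}(T,\mathit{clock})$ with its current clock (and forwards the proposal with that clock value to the other servers); on receiving $\mathrm{Confirm}(T,\hat t)$ from a client or forwarded by a server, sets $\mathit{clock}:=\max(\mathit{clock},\hat t)$ and forwards $\mathrm{Confirm}(T,\hat t)$ to all servers if not previously done. The clock changes only in this way. A transaction $T$ is \emph{assigned timestamp} $t$ if some correct server received a $\mathrm{Confirm}(T,t)$ message from a client. *)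

(* Defs.v *)
From Stdlib Require Import List.
From mathcomp Require Import all_boot.
Set Implicit Arguments. Unset Strict Implicit. Unset Printing Implicit Defensive.

Section Byblos.
(* f = bound on Byzantine servers; there are n = 4f+1 servers 'I_(4*f+1). *)
Variable f : nat.
Local Notation n := (4 * f + 1).
Local Notation srv := 'I_(4 * f + 1).
Variables (Cl Tx : eqType).

Inductive party := Srv of srv | Cli of Cl.

(* Messages.  Propose and Confirm are signed by the issuing client c
   (the client identity is part of the signed content). *)
Inductive msg :=
| Propose of Cl & Tx
| ProposeAck of Tx & nat
| FwdPropose of Cl & Tx & nat
| Confirm of Cl & Tx & nat.

(* Client-signed contents produced so far (unforgeability). *)
Inductive sigc := SigProp of Cl & Tx | SigConf of Cl & Tx & nat.

Inductive cphase :=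
| CIdle
  (* broadcasting Propose (sent = servers already sent to) and collecting
     the first ProposeAck value received from each server *)
| CWait of (srv -> bool) & (srv -> option nat)
  (* broadcasting Confirm(T, t) (sent = servers already sent to) *)
| CConf of nat & (srv -> bool).

Record state := State {
  net  : list (party * party * msg);   (* in-flight messages, in sending order *)
  dlv  : list (party * party * msg);   (* log of delivered messages (src,dst,m) *)
  sigs : list sigc;
  clk  : srv -> nat;
  fwd  : srv -> list (Cl * Tx * nat);  (* Confirms already forwarded *)
  cph  : Cl -> Tx -> cphase }.

Definition init : state :=
  State nil nil nil (fun _ => 0) (fun _ => nil) (fun _ _ => CIdle).

Definition upd_srv {X} (g : srv -> X) (j : srv) (x : X) : srv -> X :=
  fun k => if k == j then x else g k.
Definition upd_cph (g : Cl -> Tx -> cphase) (c : Cl) (T : Tx) (p : cphase) :=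
  fun c' T' => if (c' == c) && (T' == T) then p else g c' T'.

Definition set_net s l := State l (dlv s) (sigs s) (clk s) (fwd s) (cph s).
Definition set_cph s g := State (net s) (dlv s) (sigs s) (clk s) (fwd s) g.

(* Timestamp computed by a client from the first acks received:
   1 + the (f+1)-st largest of timestamp[.] (0 for servers with no ack). *)
Definition client_ts (acks : srv -> option nat) : nat :=
  (nth 0 (sort geq [seq odflt 0 (acks j) | j <- enum 'I_n]) f).+1.

Definition all_servers (src : party) (m : msg) : list (party * party * msg) :=
  [seq (src, Srv k, m) | k <- enum 'I_n].

Variable B : {set srv}.   (* Byzantine servers *)

(* Effect of delivering message m from src to dst (s has m already removed). *)
Inductive recv (s : state) : party -> party -> msg -> state -> Prop :=
| recv_byz src j m : j \in B -> recv s src (Srv j) m s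
| recv_propose c T j : j \notin B ->
    recv s (Cli c) (Srv j) (Propose c T)
      (set_net s (net s ++ (Srv j, Cli c, ProposeAck T (clk s j))
                  :: [seq (Srv j, Srv k, FwdPropose c T (clk s j))
                     | k <- enum 'I_n & k != j]))
| recv_confirm_new src c T t j : j \notin B -> ~ In (c, T, t) (fwd s j) ->
    recv s src (Srv j) (Confirm c T t)
      (State (net s ++ all_servers (Srv j) (Confirm c T t)) (dlv s) (sigs s)
             (upd_srv (clk s) j (maxn (clk s j) t))
             (upd_srv (fwd s) j ((c, T, t) :: fwd s j)) (cph s))
| recv_confirm_old src c T t j : j \notin B -> In (c, T, t) (fwd s j) ->
    recv s src (Srv j) (Confirm c T t)
      (State (net s) (dlv s) (sigs s)
             (upd_srv (clk s) j (maxn (clk s j) t)) (fwd s) (cph s))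
| recv_srv_ignore src j m : j \notin B ->
    (forall c T, m = Propose c T -> src <> Cli c) ->
    (forall c T t, m <> Confirm c T t) ->
    recv s src (Srv j) m s
| recv_ack c T k j sent acks :
    cph s c T = CWait sent acks -> acks j = None ->
    recv s (Srv j) (Cli c) (ProposeAck T k)
      (set_cph s (upd_cph (cph s) c T (CWait sent (upd_srv acks j (Some k)))))
| recv_cli_ignore src c m :
    (forall T k j sent acks, m = ProposeAck T k -> src = Srv j ->
       cph s c T = CWait sent acks -> acks j <> None) ->
    recv s src (Cli c) m s.

(* Messages a Byzantine server may send: anything, except that it cannot
   forge client-signed contents. *)
Definition byz_ok (s : state) (m : msg) : Prop :=
  match m with
  | Propose c T => In (SigProp c T) (sigs s)
  | FwdPropose c T _ => In (SigProp c T) (sigs s)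
  | Confirm c T t => In (SigConf c T t) (sigs s)
  | ProposeAck _ _ => True
  end.

Inductive step (s : state) : state -> Prop :=
| st_propose c T : cph s c T = CIdle ->
    step s (State (net s) (dlv s) (SigProp c T :: sigs s) (clk s) (fwd s)
             (upd_cph (cph s) c T (CWait (fun _ => false) (fun _ => None))))
| st_send_prop c T j sent acks : cph s c T = CWait sent acks -> sent j = false ->
    step s (State (net s ++ (Cli c, Srv j, Propose c T) :: nil) (dlv s) (sigs s)
             (clk s) (fwd s)
             (upd_cph (cph s) c T (CWait (upd_srv sent j true) acks)))
| st_decide c T sent acks : cph s c T = CWait sent acks ->
    (forall j, sent j) -> n - f <= #|[pred j | isSome (acks j)]| ->
    step s (State (net s) (dlv s) (SigConf c T (client_ts acks) :: sigs s)
             (clk s) (fwd s)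
             (upd_cph (cph s) c T (CConf (client_ts acks) (fun _ => false))))
| st_send_conf c T t j sent : cph s c T = CConf t sent -> sent j = false ->
    step s (State (net s ++ (Cli c, Srv j, Confirm c T t) :: nil) (dlv s) (sigs s)
             (clk s) (fwd s) (upd_cph (cph s) c T (CConf t (upd_srv sent j true))))
| st_deliver pre post src dst m s' :
    net s = pre ++ (src, dst, m) :: post ->
    Forall (fun e : party * party * msg => (e.1.1, e.1.2) <> (src, dst)) pre ->
    recv (State (pre ++ post) ((src, dst, m) :: dlv s) (sigs s) (clk s)
            (fwd s) (cph s)) src dst m s' ->
    step s s'
| st_byz j dst m : j \in B -> byz_ok s m ->
    step s (set_net s (net s ++ (Srv j, dst, m) :: nil)).

Inductive reachable : state -> Prop :=
| reach_init : reachable init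
| reach_step s s' : reachable s -> step s s' -> reachable s'.

Definition assigned (s : state) (T : Tx) (t : nat) : Prop :=
  exists c src j, j \notin B /\ In (src, Srv j, Confirm c T t) (dlv s).

End Byblos.

(* Main.v *)
Require Import Defs.
From mathcomp Require Import all_boot.
From mathcomp Require Import zify.
From Stdlib Require List.
Notation In := List.In.
Lemma count_ts (f : nat) (B : {set 'I_(4 * f + 1)}) (v : 'I_(4 * f + 1) -> nat) :
  #|B| <= f -> exists j, j \notin B /\ nth 0 (sort geq [seq v j | j <- enum 'I_(4 * f + 1)]) f <= v j.
Proof.
move=> hB.
set L := [seq v j | j <- enum 'I_(4 * f + 1)].
set x := nth 0 (sort geq L) f.
have Hs : sorted geq (sort geq L) by apply: sort_sorted => a b; exact: leq_total.
have Hsz : size (sort geq L) = 4 * f + 1 by rewrite size_sort size_map size_enum_ord.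
have Hc : f < count (fun y => x <= y) L.
  have hp : perm_eq (sort geq L) L by rewrite perm_sort perm_refl.
  rewrite -(permP hp).
  rewrite -(cat_take_drop f.+1 (sort geq L)) count_cat.
  apply: leq_trans (leq_addr _ _).
  have Ht : size (take f.+1 (sort geq L)) = f.+1 by rewrite size_take Hsz; case: ifP => //; lia.
  have : all (fun y => x <= y) (take f.+1 (sort geq L)).
    apply/(all_nthP 0) => i; rewrite Ht => hi.
    rewrite nth_take //.
    apply: (sorted_leq_nth (leT:=geq)) => //.
    - by move=> a b c /= h1 h2; exact: leq_trans h2 h1.
    - by move=> a /=.
    - by rewrite inE Hsz; lia.
    - by rewrite inE Hsz; lia.
  by rewrite all_count => /eqP ->; rewrite Ht.
case: (boolP [exists j, (j \notin B) && (x <= v j)]).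
  by case/existsP => j /andP [h1 h2]; exists j.
rewrite negb_exists => /forallP H.
have : count (fun y => x <= y) L <= #|B|.
  rewrite count_map enumT cardE /enum_mem size_filter.
  apply: sub_count => j /= hj.
  by move: (H j); rewrite hj andbT negbK.
lia.
Qed.

Lemma in_map_ex {A C : Type} {g : A -> C} {l : seq A} {x} :
  In x (map g l) -> exists y, x = g y.
Proof.
elim: l => //= a l IH [<-|h]; first by exists a.
exact: IH.
Qed.

Set Implicit Arguments. Unset Strict Implicit.
Section Inv.
Variables (f : nat) (Cl Tx : eqType) (B : {set 'I_(4 * f + 1)}).
Local Notation D := (list (party f Cl * party f Cl * msg Cl Tx)).

Definition Asg (d : D) k :=
  exists c T src j, j \notin B /\ In (src, Srv Cl j, Confirm c T k) d.
Definition Good (d : D) t := forall t', 0 < t' < t -> Asg d t'.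
Definition Pz (d : D) k := k = 0 \/ Asg d k.

Record Inv (s : state f Cl Tx) : Prop := {
  i_asg : forall k, Asg (dlv s) k -> Good (dlv s) k;
  i_clk : forall j, j \notin B -> Pz (dlv s) (clk s j);
  i_ack : forall j d T k, j \notin B ->
     In (Srv Cl j, d, ProposeAck Cl T k) (net s) -> Pz (dlv s) k;
  i_wait : forall c T sent acks j k, cph s c T = CWait sent acks ->
     j \notin B -> acks j = Some k -> Pz (dlv s) k;
  i_conf : forall c T t sent, cph s c T = CConf t sent -> Good (dlv s) t;
  i_sig : forall c T t, In (SigConf c T t) (sigs s) -> Good (dlv s) t;
  i_net : forall src d c T t, In (src, d, Confirm c T t) (net s) -> Good (dlv s) t }.

Lemma Asg_mono d d' k : (forall e, In e d -> In e d') -> Asg d k -> Asg d' k.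
Proof. move=> h [c [T [src [j [hj hi]]]]]; exists c, T, src, j; split => //; exact: h. Qed.
Lemma Good_mono d d' k : (forall e, In e d -> In e d') -> Good d k -> Good d' k.
Proof. move=> h hg t' ht; exact: Asg_mono h (hg t' ht). Qed.
Lemma Pz_mono d d' k : (forall e, In e d -> In e d') -> Pz d k -> Pz d' k.
Proof. move=> h [->|hk]; [by left | right; exact: Asg_mono h hk]. Qed.

Lemma decide_good s c T sent acks : #|B| <= f -> Inv s ->
  cph s c T = CWait sent acks -> Good (dlv s) (client_ts acks).
Proof.
move=> hB I hc t' ht.
have [j [hj hx]] := @count_ts f B (fun j => odflt 0 (acks j)) hB.
rewrite /client_ts in ht.
move: hx ht; set x := nth _ _ _ => hx ht.
case hA: (acks j) hx => [k|] /= hx; last by lia.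
have [hk0|hk] := i_wait I hc hj hA; first by lia.
have [->|hlt] : t' = k \/ t' < k by lia.
  exact: hk.
apply: (i_asg I hk); lia.
Qed.

End Inv.

Lemma in_app_or' (A : Type) (l m : list A) (a : A) : In a (l ++ m) -> In a l \/ In a m.
Proof. elim: l => //= [h|x l IH [->|h]]; [by right|by left; left|]. by case: (IH h) => h'; [left; right|right]. Qed.

Section Inv2.
Variables (f : nat) (Cl Tx : eqType) (B : {set 'I_(4 * f + 1)}).

Lemma Inv_init : Inv B (init f Cl Tx).
Proof.
split => //=.
- by move=> k [c [T [src [j [_ []]]]]].
- by move=> j _; left.
Qed.

Lemma recv_inv (s s' : state f Cl Tx) src dst m :
  Inv B s -> In (src, dst, m) (dlv s) ->
  (forall j T k, src = Srv Cl j -> j \notin B -> m = ProposeAck Cl T k -> Pz B (dlv s) k) ->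
  recv B s src dst m s' -> Inv B s'.
Proof.
move=> I hin hpa hr; case: hr hin hpa => {s'}.
- by [].
- move=> c T j hj hin hpa; case: I => I1 I2 I3 I4 I5 I6 I7; split => //=.
  + move=> j' d T' k hj' hh; case: (in_app_or' hh) => [h|/= [h|h]].
    * exact: I3 h.
    * injection h as hjj _ _ hk; subst j' k; exact: I2.
    * by have [y] := in_map_ex h.
  + move=> src' d c' T' t hh; case: (in_app_or' hh) => [h|/= [h|h]].
    * exact: I7 h.
    * by [].
    * by have [y] := in_map_ex h.
- move=> src' c T t j hj hnf hin hpa; case: I => I1 I2 I3 I4 I5 I6 I7.
  have hA : Asg B (dlv s) t by exists c, T, src', j.
  split => //=.
  + move=> j' hj'; rewrite /upd_srv; case: eqP => _; last exact: I2.
    by rewrite /maxn; case: ifP => _; [right | apply: I2].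
  + move=> j' d T' k hj' hh; case: (in_app_or' hh) => [h|h]; first exact: I3 h.
    by have [y] := in_map_ex h.
  + move=> src'' d c' T' t' hh; case: (in_app_or' hh) => [h|h]; first exact: I7 h.
    have [y hy] := in_map_ex h; injection hy as _ _ _ _ ->; exact: I1.
- move=> src' c T t j hj hnf hin hpa; case: I => I1 I2 I3 I4 I5 I6 I7.
  have hA : Asg B (dlv s) t by exists c, T, src', j.
  split => //=.
  move=> j' hj'; rewrite /upd_srv; case: eqP => _; last exact: I2.
  by rewrite /maxn; case: ifP => _; [right | apply: I2].
- by [].
- move=> c T k j sent acks hc hnone hin hpa; case: I => I1 I2 I3 I4 I5 I6 I7.
  split => //=.
  + move=> c' T' sent' acks' j' k'; rewrite /upd_cph.
    case: ifP => _; last exact: I4.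
    case=> _ <- hj'; rewrite /upd_srv; case: eqP => [hjj [<-]|_].
      by subst j'; exact: (hpa j T).
    exact: I4 hc hj'.
  + move=> c' T' t sent'; rewrite /upd_cph; case: ifP => _ //; exact: I5.
- by [].
Qed.

Lemma step_inv (s s' : state f Cl Tx) : #|B| <= f -> Inv B s -> step B s s' -> Inv B s'.
Proof.
move=> hB I; case => {s'}.
- move=> c T hc; case: I => I1 I2 I3 I4 I5 I6 I7; split => //=.
  + move=> c' T' sent acks j k; rewrite /upd_cph; case: ifP => _; last exact: I4.
    by case=> _ <-.
  + move=> c' T' t sent; rewrite /upd_cph; case: ifP => _ //; exact: I5.
  + by move=> c' T' t [] // h; apply: I6 h.
- move=> c T j sent acks hc hs; case: I => I1 I2 I3 I4 I5 I6 I7; split => //=.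
  + move=> j' d T' k hj' hh; case: (in_app_or' hh) => [h|/= [h|//]]; first exact: I3 h.
    by [].
  + move=> c' T' sent' acks' j' k'; rewrite /upd_cph; case: ifP => _; last exact: I4.
    case=> _ <-; exact: I4 hc.
  + move=> c' T' t sent'; rewrite /upd_cph; case: ifP => _ //; exact: I5.
  + move=> src d c' T' t hh; case: (in_app_or' hh) => [h|/= [h|//]]; first exact: I7 h.
    by [].
- move=> c T sent acks hc hall hcnt.
  have hg := decide_good hB I hc.
  case: I => I1 I2 I3 I4 I5 I6 I7; split => //=.
  + move=> c' T' sent' acks' j' k'; rewrite /upd_cph; case: ifP => _ //; exact: I4.
  + move=> c' T' t sent'; rewrite /upd_cph; case: ifP => _; last exact: I5.
    by case=> <-.
  + move=> c' T' t [[_ _ <-]|h] //; exact: I6 h.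
- move=> c T t j sent hc hs; case: I => I1 I2 I3 I4 I5 I6 I7; split => //=.
  + move=> j' d T' k hj' hh; case: (in_app_or' hh) => [h|/= [h|//]]; first exact: I3 h.
    by [].
  + move=> c' T' sent' acks' j' k'; rewrite /upd_cph; case: ifP => _ //; exact: I4.
  + move=> c' T' t' sent'; rewrite /upd_cph; case: ifP => _; last exact: I5.
    by case=> <- _; apply: I5 hc.
  + move=> src d c' T' t' hh; case: (in_app_or' hh) => [h|/= [h|//]]; first exact: I7 h.
    by case: h => _ _ _ _ <-; apply: I5 hc.
- move=> pre post src dst m s' hnet _ hr.
  set s0 := State _ _ _ _ _ _ in hr.
  have hsub : forall e, In e (dlv s) -> In e (dlv s0) by move=> e h; right.
  have hnin : forall e, In e (net s0) -> In e (net s).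
    move=> e; rewrite hnet /= => hh; case: (in_app_or' hh) => [h|h]; apply: List.in_or_app; [by left | by right; right].
  have hm : In (src, dst, m) (net s) by rewrite hnet; apply: List.in_or_app; right; left.
  case: I => I1 I2 I3 I4 I5 I6 I7.
  apply: (recv_inv (s := s0)) hr; last first.
  + move=> j T k hsrc hj hm'; subst src m.
    exact: Pz_mono hsub (I3 _ _ _ _ hj hm).
  + by left.
  split => /=.
  + move=> k [c [T [src' [j [hj [h|h]]]]]].
      injection h as h1 h2 hmm; subst; exact: Good_mono hsub (I7 _ _ _ _ _ hm).
    apply: Good_mono hsub _; apply: I1; by exists c, T, src', j.
  + move=> j hj; exact: Pz_mono hsub (I2 _ hj).
  + move=> j d T k hj h; exact: Pz_mono hsub (I3 _ _ _ _ hj (hnin _ h)).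
  + move=> c T sent acks j k hc hj ha; exact: Pz_mono hsub (I4 _ _ _ _ _ _ hc hj ha).
  + move=> c T t sent hc; exact: Good_mono hsub (I5 _ _ _ _ hc).
  + move=> c T t h; exact: Good_mono hsub (I6 _ _ _ h).
  + move=> src' d c T t h; exact: Good_mono hsub (I7 _ _ _ _ _ (hnin _ h)).
- move=> j dst m hj hok; case: I => I1 I2 I3 I4 I5 I6 I7; split => //=.
  + move=> j' d T k hj' hh; case: (in_app_or' hh) => [h|/= [h|//]]; first exact: I3 h.
    by case: h => hjj _ _; subst j'; rewrite hj in hj'.
  + move=> src d c T t hh; case: (in_app_or' hh) => [h|/= [h|//]]; first exact: I7 h.
    by injection h => *; subst; exact: I6 _ _ _ hok.
Qed.

Lemma reach_inv (s : state f Cl Tx) : #|B| <= f -> reachable B s -> Inv B s.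
Proof.
move=> hB; elim => [|s1 s2 _ IH hst]; first exact: Inv_init.
exact: step_inv hB IH hst.
Qed.

End Inv2.

Theorem lemma2 (f : nat) (Cl Tx : eqType) (B : {set 'I_(4 * f + 1)})
  (hB : #|B| <= f) (s : state f Cl Tx) (hs : reachable B s)
  (T : Tx) (t : nat) (hT : assigned B s T t) :
  forall t' : nat, 0 < t' < t -> exists T' : Tx, assigned B s T' t'.
Proof.
move=> t' ht.
have I := reach_inv hB hs.
have hA : Asg B (dlv s) t.
  by case: hT => c [src [j [hj hi]]]; exists c, T, src, j.
have [c [T' [src [j [hj hi]]]]] := i_asg I hA ht.
by exists T', c, src, j.
Qed.
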